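(* Let $\lambda>0$ and $f_1,f_2\in\Omega_\lambda$. If $\lambda\le1$, then the Hadamard product $f_1*f_2\in\Omega_\lambda$.
   Context: $\Omega_\lambda$ denotes the set of functions $f$ analytic in $\mathbb{D}=\{z:|z|<1\}$ with $f(0)=0$, $f'(0)=1$, such that $zf'(z)-f(z)=\lambda z^2\phi(z)$ for some analytic $\phi$ on $\mathbb{D}$ with $|\phi(z)|\le1$. The Hadamard product of $\sum a_kz^k$ and $\sum b_kz^k$ is $\sum a_kb_kz^k$. *)

(* Defs.v *)
From Stdlib Require Import Reals.
From Coquelicot Require Import Coquelicot.
Open Scope R_scope.

Definition in_disk (z : C) : Prop := Cmod z < 1.

Definition pseries_rep (f : C -> C) (a : nat -> C) : Prop :=
  forall z, in_disk z -> is_pseries a z (f z).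

(* f is analytic in D (on a disk: representable by its Taylor series at 0) *)
Definition analytic_disk (f : C -> C) : Prop := exists a, pseries_rep f a.

Definition Omega (lam : R) (f : C -> C) : Prop :=
  analytic_disk f /\ f (RtoC 0) = RtoC 0 /\ is_derive f (RtoC 0) (RtoC 1) /\
  exists phi : C -> C,
    analytic_disk phi /\
    (forall z, in_disk z -> Cmod (phi z) <= 1) /\
    (forall z, in_disk z -> exists d : C,
        is_derive f z d /\
        Cminus (Cmult z d) (f z) = Cmult (Cmult (RtoC lam) (Cmult z z)) (phi z)).

Definition hadamard_rep (h : C -> C) (a1 a2 : nat -> C) : Prop :=
  pseries_rep h (fun k => Cmult (a1 k) (a2 k)).

(* Main.v *)
Require Import Defs.
From Stdlib Require Import Reals.
From Coquelicot Require Import Coquelicot.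
From Stdlib Require Import ClassicalEpsilon.
From Stdlib Require Import Reals Lra Lia.
From Coquelicot Require Import Coquelicot.
Open Scope R_scope.

Notation is_seriesC := (@is_series C_AbsRing C_NormedModule).

Fixpoint cs (f : nat -> C) (n : nat) : C :=
  match n with O => RtoC 0 | S m => Cplus (cs f m) (f m) end.
Fixpoint rs (f : nat -> R) (n : nat) : R :=
  match n with O => 0 | S m => rs f m + f m end.

Lemma cs_ext f g n : (forall k, (k < n)%nat -> f k = g k) -> cs f n = cs g n.
Proof. induction n; simpl; intros H; auto. rewrite IHn, H; auto. Qed.
Lemma rs_ext f g n : (forall k, (k < n)%nat -> f k = g k) -> rs f n = rs g n.
Proof. induction n; simpl; intros H; auto. rewrite IHn, H; auto. Qed.

Lemma cs_plus f g n : cs (fun k => Cplus (f k) (g k)) n = Cplus (cs f n) (cs g n).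
Proof. induction n; simpl. { now rewrite Cplus_0_l. } rewrite IHn. ring. Qed.
Lemma cs_scal_l c f n : cs (fun k => Cmult c (f k)) n = Cmult c (cs f n).
Proof. induction n; simpl. { now rewrite Cmult_0_r. } rewrite IHn. ring. Qed.
Lemma cs_scal_r c f n : cs (fun k => Cmult (f k) c) n = Cmult (cs f n) c.
Proof. induction n; simpl. { now rewrite Cmult_0_l. } rewrite IHn. ring. Qed.
Lemma cs_conj f n : Cconj (cs f n) = cs (fun k => Cconj (f k)) n.
Proof.
  induction n; simpl.
  - unfold Cconj; simpl. apply injective_projections; simpl; ring.
  - rewrite Cplus_conj, IHn. reflexivity.
Qed.
Lemma cs_swap (F : nat -> nat -> C) n m :
  cs (fun j => cs (fun k => F j k) n) m = cs (fun k => cs (fun j => F j k) m) n.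
Proof.
  induction m; simpl.
  - induction n; simpl; auto. rewrite <- IHn. ring.
  - rewrite IHm, <- cs_plus. reflexivity.
Qed.
Lemma cs_zero n : cs (fun _ => RtoC 0) n = RtoC 0.
Proof. induction n; simpl; auto. rewrite IHn. ring. Qed.
Lemma cs_delta (x : C) k n : (k < n)%nat -> cs (fun l => if Nat.eqb l k then x else RtoC 0) n = x.
Proof.
  induction n; intros H; [lia|]. simpl.
  destruct (Nat.eqb n k) eqn:E.
  - apply Nat.eqb_eq in E. subst.
    rewrite (cs_ext _ (fun _ => RtoC 0)). { rewrite cs_zero. ring. }
    intros l Hl. destruct (Nat.eqb l k) eqn:E2; auto. apply Nat.eqb_eq in E2. lia.
  - apply Nat.eqb_neq in E. rewrite IHn by lia. ring.
Qed.
Lemma cs_RtoC f n : cs (fun k => RtoC (f k)) n = RtoC (rs f n).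
Proof. induction n; simpl; auto. rewrite IHn, RtoC_plus. reflexivity. Qed.
Lemma Cmod_cs f n : Cmod (cs f n) <= rs (fun k => Cmod (f k)) n.
Proof.
  induction n; simpl. { rewrite Cmod_0. lra. }
  eapply Rle_trans. apply Cmod_triangle. lra.
Qed.
Lemma rs_le f g n : (forall k, (k < n)%nat -> f k <= g k) -> rs f n <= rs g n.
Proof. induction n; simpl; intros H. lra. pose proof (H n ltac:(lia)). assert (rs f n <= rs g n) by (apply IHn; intros; apply H; lia). lra. Qed.
Lemma rs_nonneg f n : (forall k, 0 <= f k) -> 0 <= rs f n.
Proof. intros H; induction n; simpl. lra. pose proof (H n). lra. Qed.
Lemma rs_mono f n m : (forall k, 0 <= f k) -> (n <= m)%nat -> rs f n <= rs f m.
Proof.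
  intros H Hnm. induction Hnm. lra. simpl. pose proof (H m). lra.
Qed.
Lemma rs_scal_l c f n : rs (fun k => c * f k) n = c * rs f n.
Proof. induction n; simpl. ring. rewrite IHn. ring. Qed.
Lemma rs_plus f g n : rs (fun k => f k + g k) n = rs f n + rs g n.
Proof. induction n; simpl. ring. rewrite IHn. ring. Qed.
Lemma rs_const c n : rs (fun _ => c) n = INR n * c.
Proof. induction n; simpl rs. simpl. ring. rewrite IHn, S_INR. ring. Qed.
Lemma cs_geom q n : Cmult (Cminus q (RtoC 1)) (cs (fun j => Cpow q j) n) = Cminus (Cpow q n) (RtoC 1).
Proof. induction n; simpl. ring. rewrite Cmult_plus_distr_l, IHn. ring. Qed.
Lemma cs_split f m p : cs f (m + p) = Cplus (cs f m) (cs (fun k => f (m + k)%nat) p).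
Proof. induction p; simpl. rewrite Nat.add_0_r. ring. rewrite Nat.add_succ_r. simpl. rewrite IHp. ring. Qed.
Lemma rs_split f m p : rs f (m + p) = rs f m + rs (fun k => f (m + k)%nat) p.
Proof. induction p; simpl. rewrite Nat.add_0_r. ring. rewrite Nat.add_succ_r. simpl. rewrite IHp. ring. Qed.
Definition E (t : R) : C := (cos t, sin t).

Lemma E_mult a b : Cmult (E a) (E b) = E (a + b).
Proof. unfold E, Cmult; simpl. rewrite cos_plus, sin_plus. f_equal; ring. Qed.

Lemma E_pow t k : Cpow (E t) k = E (INR k * t).
Proof.
  induction k as [|k IH]; simpl Cpow.
  - unfold E. simpl. rewrite Rmult_0_l, cos_0, sin_0. reflexivity.
  - rewrite IH, E_mult. f_equal. rewrite S_INR. ring.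
Qed.

Lemma E_conj t : Cconj (E t) = E (- t).
Proof. unfold E, Cconj; simpl. rewrite cos_neg, sin_neg. reflexivity. Qed.

Lemma Cmod_E t : Cmod (E t) = 1.
Proof.
  unfold E, Cmod; simpl. pose proof (sin2_cos2 t) as H. unfold Rsqr in H.
  replace (cos t * (cos t * 1) + sin t * (sin t * 1)) with 1 by lra. apply sqrt_1.
Qed.

Lemma cos_eq_1_small x : cos x = 1 -> - (2 * PI) < x < 2 * PI -> x = 0.
Proof.
  intros Hc Hx.
  assert (Hs : sin (x / 2) = 0).
  { pose proof (cos_2a_sin (x/2)) as H. replace (2 * (x/2)) with x in H by field.
    nra. }
  destruct (sin_eq_0_0 _ Hs) as [m Hm].
  pose proof PI_RGT_0.
  assert (Hm1 : -1 < IZR m < 1).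
  { split.
    - apply (Rmult_lt_reg_r PI); [lra|]. nra.
    - apply (Rmult_lt_reg_r PI); [lra|]. nra. }
  destruct Hm1 as [H1 H2]. apply lt_IZR in H1. apply lt_IZR in H2.
  assert (m = 0%Z) by lia. subst m. simpl in Hm. lra.
Qed.

Lemma cos_2PI_nat k : cos (2 * PI * INR k) = 1 /\ sin (2 * PI * INR k) = 0.
Proof.
  pose proof (cos_period 0 k) as H1. pose proof (sin_period 0 k) as H2.
  rewrite Rplus_0_l, cos_0 in H1. rewrite Rplus_0_l, sin_0 in H2.
  replace (2 * PI * INR k) with (2 * INR k * PI) by ring. auto.
Qed.

Definition ang (M : nat) : R := 2 * PI / INR M.

Lemma Cpow_one j : Cpow (RtoC 1) j = RtoC 1.
Proof. induction j; simpl; auto. rewrite IHj. ring. Qed.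

Lemma geom_E M k l : (0 < M)%nat -> (k < M)%nat -> (l < M)%nat ->
  cs (fun j => Cpow (E (ang M * (INR k - INR l))) j) M =
  if Nat.eqb k l then RtoC (INR M) else RtoC 0.
Proof.
  intros HM Hk Hl.
  assert (HMr : 0 < INR M) by (apply lt_0_INR; lia).
  destruct (Nat.eqb k l) eqn:Ekl.
  - apply Nat.eqb_eq in Ekl. subst l.
    replace (E (ang M * (INR k - INR k))) with (RtoC 1).
    2:{ unfold E. replace (ang M * (INR k - INR k)) with 0 by ring. rewrite cos_0, sin_0. reflexivity. }
    rewrite (cs_ext _ (fun _ => RtoC 1)) by (intros; apply Cpow_one).
    rewrite cs_RtoC, rs_const. f_equal. ring.
  - apply Nat.eqb_neq in Ekl.
    set (q := E (ang M * (INR k - INR l))).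
    assert (Hq1 : q <> RtoC 1).
    { intros Hq. unfold q, E in Hq. injection Hq as Hc Hs.
      apply cos_eq_1_small in Hc.
      + unfold ang in Hc. apply Rmult_integral in Hc. destruct Hc as [Hc|Hc].
        * unfold Rdiv in Hc. pose proof PI_RGT_0.
          apply Rmult_integral in Hc. destruct Hc as [Hc|Hc]; [lra|].
          apply Rinv_neq_0_compat in Hc; auto. lra.
        * apply Ekl. apply INR_eq. lra.
      + unfold ang. pose proof PI_RGT_0.
        assert (INR k < INR M) by (apply lt_INR; lia).
        assert (INR l < INR M) by (apply lt_INR; lia).
        pose proof (pos_INR k). pose proof (pos_INR l).
        replace (2 * PI / INR M * (INR k - INR l)) with (2 * PI * ((INR k - INR l) / INR M)) by (field; lra).
        assert (-1 < (INR k - INR l) / INR M < 1).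
        { split.
          - apply (Rmult_lt_reg_r (INR M)); auto. unfold Rdiv. rewrite Rmult_assoc, Rinv_l by lra. lra.
          - apply (Rmult_lt_reg_r (INR M)); auto. unfold Rdiv. rewrite Rmult_assoc, Rinv_l by lra. lra. }
        nra. }
    assert (HqM : Cpow q M = RtoC 1).
    { unfold q. rewrite E_pow. unfold ang.
      replace (INR M * (2 * PI / INR M * (INR k - INR l))) with (2 * PI * INR k - 2 * PI * INR l) by (field; lra).
      unfold E. rewrite cos_minus, sin_minus.
      destruct (cos_2PI_nat k) as [c1 s1]. destruct (cos_2PI_nat l) as [c2 s2].
      rewrite c1, s1, c2, s2. unfold RtoC. f_equal; ring. }
    pose proof (cs_geom q M) as G. rewrite HqM in G.
    assert (Hne : Cminus q (RtoC 1) <> RtoC 0).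
    { intros H. apply Hq1. apply Ceq_minus in H. auto. }
    replace (cs (fun j => Cpow q j) M) with (Cmult (Cinv (Cminus q (RtoC 1))) (Cmult (Cminus q (RtoC 1)) (cs (fun j => Cpow q j) M))).
    + rewrite G. ring.
    + field. auto.
Qed.

Lemma cs_mult f g n m : Cmult (cs f n) (cs g m) = cs (fun k => cs (fun l => Cmult (f k) (g l)) m) n.
Proof.
  rewrite <- cs_scal_r. apply cs_ext. intros k _. rewrite <- cs_scal_l. reflexivity.
Qed.

Lemma dft (c : nat -> C) M : (0 < M)%nat ->
  cs (fun j => let P := cs (fun k => Cmult (c k) (E (INR k * (INR j * ang M)))) M in Cmult P (Cconj P)) M
  = Cmult (RtoC (INR M)) (cs (fun k => Cmult (c k) (Cconj (c k))) M).
Proof.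
  intros HM. cbv zeta.
  rewrite (cs_ext _ (fun j => cs (fun k => cs (fun l =>
      Cmult (Cmult (c k) (Cconj (c l))) (Cpow (E (ang M * (INR k - INR l))) j)) M) M)).
  2:{ intros j _. rewrite cs_conj, cs_mult. apply cs_ext. intros k _. apply cs_ext. intros l _.
      rewrite Cmult_conj, E_conj, E_pow.
      replace (Cmult (Cmult (c k) (E (INR k * (INR j * ang M)))) (Cmult (Cconj (c l)) (E (- (INR l * (INR j * ang M))))))
        with (Cmult (Cmult (c k) (Cconj (c l))) (Cmult (E (INR k * (INR j * ang M))) (E (- (INR l * (INR j * ang M)))))) by ring.
      rewrite E_mult. f_equal. f_equal. ring. }
  rewrite cs_swap.
  rewrite (cs_ext _ (fun k => Cmult (RtoC (INR M)) (Cmult (c k) (Cconj (c k))))).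
  { rewrite cs_scal_l. reflexivity. }
  intros k Hk. rewrite cs_swap.
  rewrite (cs_ext _ (fun l => if Nat.eqb l k then Cmult (RtoC (INR M)) (Cmult (c k) (Cconj (c k))) else RtoC 0)).
  { apply cs_delta; auto. }
  intros l Hl. rewrite cs_scal_l, geom_E by auto.
  rewrite Nat.eqb_sym. destruct (Nat.eqb l k) eqn:E1.
  - apply Nat.eqb_eq in E1. subst. ring.
  - ring.
Qed.
Lemma sum_n_cs (f : nat -> C) m : sum_n f m = cs f (S m).
Proof.
  induction m as [|m IH].
  - rewrite sum_O. simpl. now rewrite Cplus_0_l.
  - rewrite sum_Sn, IH. reflexivity.
Qed.

Lemma sum_n_rs (f : nat -> R) m : sum_n f m = rs f (S m).
Proof.
  induction m as [|m IH].
  - rewrite sum_O. simpl. ring.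
  - rewrite sum_Sn, IH. reflexivity.
Qed.

Lemma series_C_eps (t : nat -> C) l :
  is_seriesC t l <-> forall eps, 0 < eps -> exists N, forall n, (N <= n)%nat -> Cmod (Cminus (cs t n) l) < eps.
Proof.
  split.
  - intros H eps Heps.
    assert (H2 : eventually (fun m => ball_norm l (mkposreal eps Heps) (sum_n t m))).
    { apply H. apply locally_le_locally_norm. apply locally_norm_ball_norm. }
    destruct H2 as [N HN]. exists (S N). intros n Hn.
    destruct n as [|n]; [lia|]. rewrite <- sum_n_cs. apply (HN n). lia.
  - intros H P HP.
    apply locally_norm_le_locally in HP. destruct HP as [eps HP].
    destruct (H eps (cond_pos eps)) as [N HN]. exists N. intros n Hn.
    apply HP. unfold ball_norm. rewrite sum_n_cs. apply HN. lia.
Qed.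

Lemma series_R_eps (t : nat -> R) l :
  is_series t l <-> forall eps, 0 < eps -> exists N, forall n, (N <= n)%nat -> Rabs (rs t n - l) < eps.
Proof.
  split.
  - intros H eps Heps.
    assert (H2 : eventually (fun m => ball_norm l (mkposreal eps Heps) (sum_n t m))).
    { apply H. apply locally_le_locally_norm. apply locally_norm_ball_norm. }
    destruct H2 as [N HN]. exists (S N). intros n Hn.
    destruct n as [|n]; [lia|]. rewrite <- sum_n_rs. apply (HN n). lia.
  - intros H P HP.
    apply locally_norm_le_locally in HP. destruct HP as [eps HP].
    destruct (H eps (cond_pos eps)) as [N HN]. exists N. intros n Hn.
    apply HP. unfold ball_norm. rewrite sum_n_rs. apply HN. lia.
Qed.

Lemma Cmod_diff_tri a b c : Cmod (Cminus a c) <= Cmod (Cminus a b) + Cmod (Cminus b c).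
Proof.
  replace (Cminus a c) with (Cplus (Cminus a b) (Cminus b c)) by ring. apply Cmod_triangle.
Qed.

Lemma Cmod_minus_sym a b : Cmod (Cminus a b) = Cmod (Cminus b a).
Proof. replace (Cminus a b) with (Copp (Cminus b a)) by ring. apply Cmod_opp. Qed.

Lemma series_unique_C (t : nat -> C) (l1 l2 : C) : is_seriesC t l1 -> is_seriesC t l2 -> l1 = l2.
Proof.
  intros H1' H2'. pose proof (proj1 (series_C_eps t l1) H1') as H1. pose proof (proj1 (series_C_eps t l2) H2') as H2.
  assert (Hz : Cmod (Cminus l1 l2) = 0).
  { apply Rle_antisym; [|apply Cmod_ge_0].
    apply Rnot_lt_le. intros Hp0. assert (Hp : 0 < Cmod (Cminus l1 l2) / 2) by lra.
    destruct (H1 _ Hp) as [N1 HN1]. destruct (H2 _ Hp) as [N2 HN2].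
    specialize (HN1 (N1 + N2)%nat ltac:(lia)). specialize (HN2 (N1 + N2)%nat ltac:(lia)).
    pose proof (Cmod_diff_tri l1 (cs t (N1 + N2)) l2).
    rewrite (Cmod_minus_sym l1 (cs t (N1 + N2))) in H.
    assert (Cmod (Cminus l1 l2) < Cmod (Cminus l1 l2) / 2 + Cmod (Cminus l1 l2) / 2) by lra. lra. }
  apply Cmod_eq_0 in Hz. apply Ceq_minus. auto.
Qed.

Lemma series_lim_le (t : nat -> C) (l x : C) e : is_seriesC t l ->
  (exists N, forall n, (N <= n)%nat -> Cmod (Cminus (cs t n) x) <= e) -> Cmod (Cminus l x) <= e.
Proof.
  intros H [N HN]. apply Rnot_lt_le. intros Hlt.
  pose proof (proj1 (series_C_eps t l) H) as H'.
  destruct (H' (Cmod (Cminus l x) - e) ltac:(lra)) as [N' HN'].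
  specialize (HN (N + N')%nat ltac:(lia)). specialize (HN' (N + N')%nat ltac:(lia)).
  pose proof (Cmod_diff_tri l (cs t (N + N')) x).
  rewrite (Cmod_minus_sym l (cs t (N + N'))) in H0. lra.
Qed.

Lemma series_norm_le (t : nat -> C) (l : C) S : is_seriesC t l ->
  (forall n, Cmod (cs t n) <= S) -> Cmod l <= S.
Proof.
  intros H HS. replace l with (Cminus l (RtoC 0)) by ring.
  apply (series_lim_le t). auto. exists O. intros n _.
  replace (Cminus (cs t n) (RtoC 0)) with (cs t n) by ring. auto.
Qed.

Lemma series_R_le (b : nat -> R) L : is_series b L -> (forall k, 0 <= b k) -> forall n, rs b n <= L.
Proof.
  intros H Hb n. apply Rnot_lt_le. intros Hlt.
  destruct (proj1 (series_R_eps b L) H (rs b n - L) ltac:(lra)) as [N HN].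
  specialize (HN (n + N)%nat ltac:(lia)).
  pose proof (rs_mono b n (n + N) Hb ltac:(lia)).
  apply Rabs_def2 in HN. lra.
Qed.

Lemma ex_series_bounded (b : nat -> R) S : (forall k, 0 <= b k) -> (forall n, rs b n <= S) -> ex_series b.
Proof.
  intros Hb HS.
  destruct (ex_finite_lim_seq_incr (sum_n b) S) as [l Hl].
  - intros n. rewrite !sum_n_rs. apply rs_mono; auto.
  - intros n. rewrite sum_n_rs. auto.
  - exists l. exact Hl.
Qed.

Lemma series_R_tail (b : nat -> R) L : is_series b L -> (forall k, 0 <= b k) ->
  forall eps, 0 < eps -> exists N, forall n p, (N <= n)%nat -> rs (fun k => b (n + k)%nat) p <= eps.
Proof.
  intros H Hb eps Heps.
  destruct (proj1 (series_R_eps b L) H eps Heps) as [N HN].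
  exists N. intros n p Hn. specialize (HN n Hn).
  pose proof (series_R_le b L H Hb (n + p)). rewrite rs_split in H0.
  apply Rabs_def2 in HN. lra.
Qed.

Lemma derive_eps (f : C -> C) (z l : C) :
  (forall eps, 0 < eps -> exists del, 0 < del /\ forall w, Cmod (Cminus w z) < del ->
     Cmod (Cminus (Cminus (f w) (f z)) (Cmult (Cminus w z) l)) <= eps * Cmod (Cminus w z)) ->
  is_derive f z l.
Proof.
  intros H. split.
  - apply is_linear_scal_l.
  - intros x Hx. pose proof (@is_filter_lim_locally_unique C_AbsRing (AbsRing_NormedModule C_AbsRing) z x Hx) as Hzx. subst x.
    intros eps. refine (@locally_le_locally_norm C_AbsRing (AbsRing_NormedModule C_AbsRing) z _ _).
    destruct (H eps (cond_pos eps)) as [del [Hdel Hw]].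
    exists (mkposreal del Hdel). intros w Hb. apply Hw. exact Hb.
Qed.

Lemma ex_series_k2 q : 0 <= q < 1 -> ex_series (fun k => INR k ^ 2 * q ^ k).
Proof.
  intros Hq.
  assert (Hr : CV_radius (fun _ : nat => 1) = 1).
  { replace (Finite 1) with (Finite (/ 1)) by (f_equal; field).
    apply CV_radius_finite_DAlembert. intros; lra. lra.
    apply is_lim_seq_ext with (fun _ => 1). intros. rewrite Rdiv_1_r, Rabs_R1. auto.
    apply is_lim_seq_const. }
  assert (Hd : CV_radius (PS_derive (PS_derive (fun _ : nat => 1))) = 1).
  { rewrite !CV_radius_derive. auto. }
  assert (Hin : Rbar_lt (Rabs q) (CV_radius (PS_derive (PS_derive (fun _ : nat => 1))))).
  { rewrite Hd. simpl. rewrite Rabs_pos_eq by lra. lra. }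
  pose proof (CV_disk_inside _ _ Hin) as Hex.
  apply (@ex_series_le R_AbsRing R_CompleteNormedModule _ _ ) with (2 := Hex).
  intros n. unfold PS_derive. change norm with Rabs.
  rewrite Rabs_pos_eq by (apply Rmult_le_pos; [apply pow_le; apply pos_INR| apply pow_le; lra]).
  rewrite Rabs_pos_eq.
  2:{ apply Rmult_le_pos; [|apply pow_le; lra]. apply Rmult_le_pos; [apply pos_INR|]. apply Rmult_le_pos; [apply pos_INR|lra]. }
  apply Rmult_le_compat_r. apply pow_le; lra.
  rewrite !S_INR. pose proof (pos_INR n). nra.
Qed.

Lemma rs_term_le f k N : (forall j, 0 <= f j) -> (k < N)%nat -> f k <= rs f N.
Proof.
  intros Hf Hk. pose proof (rs_mono f (S k) N Hf Hk). simpl in H.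
  pose proof (rs_nonneg f k Hf). lra.
Qed.

Lemma Cmod_Cpow_R (r : R) k : 0 <= r -> Cmod (Cpow (RtoC r) k) = r ^ k.
Proof. intros Hr. rewrite Cmod_pow, Cmod_R, Rabs_pos_eq; auto. Qed.

Lemma growth (a : nat -> C) (F : C -> C) :
  (forall z, Cmod z < 1 -> is_seriesC (fun k => Cmult (Cpow z k) (a k)) (F z)) ->
  forall rho, 0 <= rho < 1 -> ex_series (fun k => INR k ^ 2 * (Cmod (a k) * rho ^ k)).
Proof.
  intros HF rho Hrho.
  set (r := (1 + rho) / 2).
  assert (Hr : 0 < r < 1) by (unfold r; lra).
  assert (Hz : Cmod (RtoC r) < 1) by (rewrite Cmod_R, Rabs_pos_eq; lra).
  set (t := fun k => Cmult (Cpow (RtoC r) k) (a k)).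
  pose proof (proj1 (series_C_eps t (F (RtoC r))) (HF _ Hz) 1 ltac:(lra)) as [N HN].
  set (Mb := 2 + rs (fun k => Cmod (t k)) N).
  assert (Hb : forall n, r ^ n * Cmod (a n) <= Mb).
  { intros n. assert (Ht : Cmod (t n) = r ^ n * Cmod (a n)).
    { unfold t. rewrite Cmod_mult, Cmod_Cpow_R; lra. }
    rewrite <- Ht. unfold Mb.
    pose proof (rs_nonneg (fun k => Cmod (t k)) N (fun k => Cmod_ge_0 _)).
    destruct (Compare_dec.le_lt_dec N n) as [Hn|Hn].
    - pose proof (HN n Hn). pose proof (HN (S n) ltac:(lia)). simpl cs in H1.
      replace (t n) with (Cminus (Cminus (Cplus (cs t n) (t n)) (F (RtoC r))) (Cminus (cs t n) (F (RtoC r)))) by ring.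
      eapply Rle_trans. apply Cmod_diff_tri with (b := RtoC 0).
      replace (Cminus (Cminus (Cplus (cs t n) (t n)) (F (RtoC r))) (RtoC 0)) with (Cminus (Cplus (cs t n) (t n)) (F (RtoC r))) by ring.
      replace (Cminus (RtoC 0) (Cminus (cs t n) (F (RtoC r)))) with (Copp (Cminus (cs t n) (F (RtoC r)))) by ring.
      rewrite Cmod_opp. lra.
    - pose proof (rs_term_le (fun k => Cmod (t k)) n N (fun k => Cmod_ge_0 _) Hn). cbv beta in H0. eapply Rle_trans; [exact H0|]. lra. }
  set (q := rho / r).
  assert (Hq : 0 <= q < 1).
  { assert (rho < r) by (unfold r; lra). unfold q. split. apply Rdiv_le_0_compat; lra.
    unfold Rdiv. apply (Rmult_lt_reg_r r); [lra|]. rewrite Rmult_assoc, Rinv_l by lra. lra. }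
  apply (@ex_series_le R_AbsRing R_CompleteNormedModule _ (fun k => Mb * (INR k ^ 2 * q ^ k))).
  - intros n. change norm with Rabs.
    assert (0 <= INR n ^ 2 * (Cmod (a n) * rho ^ n)).
    { apply Rmult_le_pos. apply pow_le, pos_INR. apply Rmult_le_pos. apply Cmod_ge_0. apply pow_le; lra. }
    rewrite Rabs_pos_eq by auto.
    replace rho with (r * q) by (unfold q; field; lra).
    rewrite Rpow_mult_distr.
    specialize (Hb n). assert (0 <= INR n ^ 2 * q ^ n) by (apply Rmult_le_pos; [apply pow_le, pos_INR| apply pow_le; lra]).
    replace (INR n ^ 2 * (Cmod (a n) * (r ^ n * q ^ n))) with ((r ^ n * Cmod (a n)) * (INR n ^ 2 * q ^ n)) by ring.
    apply Rmult_le_compat_r; auto.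
  - apply (@ex_series_scal_l R_AbsRing R_NormedModule). apply ex_series_k2; auto.
Qed.

Definition dpow (z : C) (k : nat) : C :=
  match k with O => RtoC 0 | S j => Cmult (RtoC (INR (S j))) (Cpow z j) end.

Definition Ek (w z : C) (k : nat) : C :=
  Cminus (Cminus (Cpow w k) (Cpow z k)) (Cmult (Cminus w z) (dpow z k)).

Lemma Ek_rec w z k : Ek w z (S k) = Cplus (Cmult w (Ek w z k)) (Cmult (Cmult (Cminus w z) (Cminus w z)) (dpow z k)).
Proof.
  unfold Ek. destruct k as [|j].
  - simpl dpow. simpl Cpow. replace (RtoC (INR 1)) with (RtoC 1) by (simpl; auto). ring.
  - unfold dpow. rewrite (S_INR (S j)). rewrite RtoC_plus. simpl Cpow. ring.
Qed.

Lemma dpow_bound z k rho : 0 < rho -> Cmod z <= rho -> rho * Cmod (dpow z k) <= INR k * rho ^ k.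
Proof.
  intros Hr Hz. destruct k as [|j]; unfold dpow.
  - rewrite Cmod_0. simpl. lra.
  - rewrite Cmod_mult, Cmod_R, Rabs_pos_eq by apply pos_INR. rewrite Cmod_pow.
    rewrite <- tech_pow_Rmult. pose proof (pos_INR (S j)).
    assert (Cmod z ^ j <= rho ^ j) by (apply pow_incr; split; [apply Cmod_ge_0|auto]).
    assert (0 <= Cmod z ^ j) by (apply pow_le, Cmod_ge_0).
    replace (rho * (INR (S j) * Cmod z ^ j)) with (INR (S j) * (rho * Cmod z ^ j)) by ring.
    replace (INR (S j) * (rho * rho ^ j)) with (INR (S j) * (rho * rho ^ j)) by ring.
    apply Rmult_le_compat_l; auto. apply Rmult_le_compat_l; lra.
Qed.

Lemma Ek_bound w z k rho : 0 < rho -> Cmod z <= rho -> Cmod w <= rho ->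
  rho ^ 2 * Cmod (Ek w z k) <= INR k ^ 2 * rho ^ k * Cmod (Cminus w z) ^ 2.
Proof.
  intros Hr Hz Hw. induction k as [|k IH].
  - unfold Ek. simpl. replace (Cminus (Cminus (RtoC 1) (RtoC 1)) (Cmult (Cminus w z) (RtoC 0))) with (RtoC 0) by ring.
    rewrite Cmod_0. lra.
  - rewrite Ek_rec.
    set (d := Cmod (Cminus w z)) in *.
    pose proof (dpow_bound z k rho Hr Hz) as Hd.
    assert (H1 : Cmod (Cplus (Cmult w (Ek w z k)) (Cmult (Cmult (Cminus w z) (Cminus w z)) (dpow z k)))
             <= Cmod w * Cmod (Ek w z k) + d * d * Cmod (dpow z k)).
    { eapply Rle_trans. apply Cmod_triangle. rewrite !Cmod_mult. unfold d. lra. }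
    assert (H2 : rho ^ 2 * (Cmod w * Cmod (Ek w z k)) <= rho * (INR k ^ 2 * rho ^ k * d ^ 2)).
    { replace (rho ^ 2 * (Cmod w * Cmod (Ek w z k))) with (Cmod w * (rho ^ 2 * Cmod (Ek w z k))) by ring.
      apply Rle_trans with (rho * (rho ^ 2 * Cmod (Ek w z k))).
      apply Rmult_le_compat_r. apply Rmult_le_pos. nra. apply Cmod_ge_0. auto.
      apply Rmult_le_compat_l; lra. }
    assert (H3 : rho ^ 2 * (d * d * Cmod (dpow z k)) <= rho * (d ^ 2 * (INR k * rho ^ k))).
    { replace (rho ^ 2 * (d * d * Cmod (dpow z k))) with (rho * (d ^ 2 * (rho * Cmod (dpow z k)))) by ring.
      apply Rmult_le_compat_l. lra. apply Rmult_le_compat_l. apply pow2_ge_0. auto. }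
    assert (H4 : 0 <= INR k * rho ^ (S k) * d ^ 2).
    { apply Rmult_le_pos. apply Rmult_le_pos. apply pos_INR. apply pow_le; lra. apply pow2_ge_0. }
    apply Rle_trans with (rho ^ 2 * (Cmod w * Cmod (Ek w z k) + d * d * Cmod (dpow z k))).
    apply Rmult_le_compat_l. apply pow2_ge_0. auto.
    rewrite S_INR. simpl pow. simpl pow in H2, H3, H4.
    pose proof (pos_INR k). assert (0 <= rho * rho ^ k * (d * (d * 1))) by (apply Rmult_le_pos; [apply Rmult_le_pos; [lra|apply pow_le; lra]|nra]). nra.
Qed.

Lemma Series_R_bound (g : nat -> R) : ex_series g -> (forall k, 0 <= g k) -> forall n, rs g n <= Series g.
Proof. intros H Hg n. apply series_R_le; auto. apply Series_correct. auto. Qed.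

Lemma pser_derive (a : nat -> C) (F : C -> C) (z D : C) :
  (forall w, Cmod w < 1 -> is_seriesC (fun k => Cmult (Cpow w k) (a k)) (F w)) ->
  Cmod z < 1 ->
  is_seriesC (fun k => Cmult (Cpow z k) (Cmult (RtoC (INR (S k))) (a (S k)))) D ->
  is_derive F z D.
Proof.
  intros HF Hz HD.
  set (rho := (1 + Cmod z) / 2).
  pose proof (Cmod_ge_0 z) as Hz0.
  assert (Hrho : 0 < rho < 1) by (unfold rho; lra).
  set (g := fun k => INR k ^ 2 * (Cmod (a k) * rho ^ k)).
  assert (Hg : ex_series g) by (apply (growth a F HF); lra).
  assert (Hg0 : forall k, 0 <= g k).
  { intros k. unfold g. apply Rmult_le_pos. apply pow2_ge_0. apply Rmult_le_pos. apply Cmod_ge_0. apply pow_le; lra. }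
  set (K := Series g).
  assert (HK : 0 <= K) by (pose proof (Series_R_bound g Hg Hg0 O); simpl in H; unfold K; lra).
  assert (HD' : is_seriesC (fun k => Cmult (a k) (dpow z k)) D).
  { apply (is_series_decr_1 (V := C_NormedModule)).
    apply (is_series_ext (V := C_NormedModule)) with (a := fun k => Cmult (Cpow z k) (Cmult (RtoC (INR (S k))) (a (S k)))).
    - intros k. unfold dpow. change (Cmult (Cpow z k) (Cmult (RtoC (INR (S k))) (a (S k))) = Cmult (a (S k)) (Cmult (RtoC (INR (S k))) (Cpow z k))). ring.
    - match goal with |- is_series _ ?l => replace l with D; auto end.
      change (D = Cplus D (Copp (Cmult (a O) (dpow z O)))). unfold dpow. ring. }
  apply derive_eps. intros eps Heps.
  exists (Rmin ((1 - Cmod z) / 2) (eps * rho ^ 2 / (K + 1))). split.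
  { apply Rmin_pos. lra. apply Rdiv_lt_0_compat. apply Rmult_lt_0_compat; auto. nra. lra. }
  intros w Hw.
  assert (Hdl1 : Cmod (Cminus w z) < (1 - Cmod z) / 2) by (eapply Rlt_le_trans; [exact Hw| apply Rmin_l]).
  assert (Hdl2 : Cmod (Cminus w z) < eps * rho ^ 2 / (K + 1)) by (eapply Rlt_le_trans; [exact Hw| apply Rmin_r]).
  assert (Hwr : Cmod w <= rho).
  { replace w with (Cplus z (Cminus w z)) by ring.
    eapply Rle_trans. apply Cmod_triangle. unfold rho. lra. }
  assert (Hw1 : Cmod w < 1) by lra.
  pose proof (HF w Hw1) as HFw. pose proof (HF z Hz) as HFz.
  pose proof (is_series_minus _ _ _ _ HFw HFz) as H1.
  pose proof (is_series_scal (Cminus w z) _ _ HD') as H2.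
  pose proof (is_series_minus _ _ _ _ H1 H2) as H3.
  assert (H4 : is_seriesC (fun k => Cmult (a k) (Ek w z k))
           (Cminus (Cminus (F w) (F z)) (Cmult (Cminus w z) D))).
  { apply (is_series_ext (V := C_NormedModule)) with (2 := H3).
    intros k. unfold Ek. change (Cplus (Cplus (Cmult (Cpow w k) (a k)) (Copp (Cmult (Cpow z k) (a k))))
       (Copp (Cmult (Cminus w z) (Cmult (a k) (dpow z k)))) = Cmult (a k) (Cminus (Cminus (Cpow w k) (Cpow z k)) (Cmult (Cminus w z) (dpow z k)))).
    ring. }
  set (d := Cmod (Cminus w z)) in *.
  assert (Hd0 : 0 <= d) by apply Cmod_ge_0.
  apply Rle_trans with (d ^ 2 / rho ^ 2 * K).
  - apply (series_norm_le _ _ _ H4). intros n.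
    eapply Rle_trans. apply Cmod_cs.
    apply Rle_trans with (rs (fun k => d ^ 2 / rho ^ 2 * g k) n).
    + apply rs_le. intros k _. rewrite Cmod_mult.
      pose proof (Ek_bound w z k rho ltac:(lra) ltac:(unfold rho; lra) Hwr) as HE.
      fold d in HE. unfold g.
      assert (0 < rho ^ 2) by (apply pow_lt; lra).
      apply (Rmult_le_reg_l (rho ^ 2)); auto.
      replace (rho ^ 2 * (d ^ 2 / rho ^ 2 * (INR k ^ 2 * (Cmod (a k) * rho ^ k))))
        with (Cmod (a k) * (INR k ^ 2 * rho ^ k * d ^ 2)) by (field; lra).
      replace (rho ^ 2 * (Cmod (a k) * Cmod (Ek w z k))) with (Cmod (a k) * (rho ^ 2 * Cmod (Ek w z k))) by ring.
      apply Rmult_le_compat_l; auto. apply Cmod_ge_0.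
    + rewrite rs_scal_l. apply Rmult_le_compat_l.
      apply Rdiv_le_0_compat. apply pow2_ge_0. apply pow_lt; lra.
      apply Series_R_bound; auto.
  - assert (0 < rho ^ 2) by (apply pow_lt; lra).
    assert (d * K <= eps * rho ^ 2).
    { apply Rle_trans with (eps * rho ^ 2 / (K + 1) * K).
      apply Rmult_le_compat_r; lra.
      apply (Rmult_le_reg_r (K + 1)). lra.
      unfold Rdiv. replace (eps * rho ^ 2 * / (K + 1) * K * (K + 1)) with (eps * rho ^ 2 * K) by (field; lra).
      nra. }
    apply (Rmult_le_reg_r (rho ^ 2)); auto.
    replace (d ^ 2 / rho ^ 2 * K * rho ^ 2) with (d * (d * K)) by (field; lra).
    replace (eps * d * rho ^ 2) with (d * (eps * rho ^ 2)) by ring.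
    apply Rmult_le_compat_l; auto.
Qed.

Lemma RtoC_inj' (x y : R) : RtoC x = RtoC y -> x = y.
Proof. intros H. apply (f_equal fst) in H. simpl in H. auto. Qed.

Lemma sq_le_eps (S B : R) : 0 <= B -> (forall eps, 0 < eps <= 1 -> S <= (B + eps) ^ 2) -> S <= B ^ 2.
Proof.
  intros HB H. apply Rnot_lt_le. intros Hlt.
  set (e := Rmin 1 ((S - B ^ 2) / (2 * B + 2))).
  assert (He : 0 < e <= 1).
  { unfold e. split. apply Rmin_pos. lra. apply Rdiv_lt_0_compat; lra. apply Rmin_l. }
  assert (He2 : e <= (S - B ^ 2) / (2 * B + 2)) by apply Rmin_r.
  specialize (H e He).
  assert (e * (2 * B + 2) <= S - B ^ 2).
  { apply (Rmult_le_compat_r (2 * B + 2)) in He2; [|lra].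
    unfold Rdiv in He2. rewrite Rmult_assoc, Rinv_l in He2 by lra. lra. }
  nra.
Qed.

Lemma parseval (b : nat -> C) (G : C -> C) (r B : R) :
  0 <= r -> ex_series (fun k => Cmod (b k) * r ^ k) ->
  (forall u, Cmod u = r -> is_seriesC (fun k => Cmult (Cpow u k) (b k)) (G u)) ->
  (forall u, Cmod u = r -> Cmod (G u) <= B) ->
  forall N, rs (fun k => Cmod (b k) ^ 2 * r ^ (2 * k)) N <= B ^ 2.
Proof.
  intros Hr Hex HG HB N.
  assert (Hur : Cmod (RtoC r) = r) by (rewrite Cmod_R, Rabs_pos_eq; auto).
  assert (HB0 : 0 <= B) by (eapply Rle_trans; [apply Cmod_ge_0| apply (HB _ Hur)]).
  set (h := fun k => Cmod (b k) * r ^ k).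
  assert (Hh : forall k, 0 <= h k) by (intros; unfold h; apply Rmult_le_pos; [apply Cmod_ge_0|apply pow_le; auto]).
  apply sq_le_eps; auto. intros eps Heps.
  destruct (series_R_tail h (Series h) (Series_correct _ Hex) Hh eps ltac:(lra)) as [N0 HN0].
  set (M := (N + N0 + 1)%nat).
  assert (Htr : forall u, Cmod u = r -> Cmod (cs (fun k => Cmult (Cpow u k) (b k)) M) <= B + eps).
  { intros u Hu.
    assert (Hd : Cmod (Cminus (G u) (cs (fun k => Cmult (Cpow u k) (b k)) M)) <= eps).
    { apply (series_lim_le _ _ _ _ (HG u Hu)).
      exists M. intros n Hn. replace n with (M + (n - M))%nat by lia.
      rewrite cs_split. replace (Cminus (Cplus (cs (fun k => Cmult (Cpow u k) (b k)) M)
         (cs (fun k => Cmult (Cpow u (M + k)) (b (M + k)%nat)) (n - M))) (cs (fun k => Cmult (Cpow u k) (b k)) M))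
        with (cs (fun k => Cmult (Cpow u (M + k)) (b (M + k)%nat)) (n - M)) by ring.
      eapply Rle_trans. apply Cmod_cs.
      eapply Rle_trans. 2: apply (HN0 M (n - M)%nat); unfold M; lia.
      apply rs_le. intros k _. unfold h. rewrite Cmod_mult, Cmod_pow, Hu. lra. }
    pose proof (HB u Hu).
    pose proof (Cmod_diff_tri (cs (fun k => Cmult (Cpow u k) (b k)) M) (G u) (RtoC 0)).
    replace (Cminus (cs (fun k => Cmult (Cpow u k) (b k)) M) (RtoC 0)) with (cs (fun k => Cmult (Cpow u k) (b k)) M) in H0 by ring.
    replace (Cminus (G u) (RtoC 0)) with (G u) in H0 by ring.
    rewrite Cmod_minus_sym in H0. lra. }
  set (c := fun k => Cmult (b k) (RtoC (r ^ k))).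
  assert (HM : (0 < M)%nat) by (unfold M; lia).
  pose proof (dft c M HM) as Hdft. cbv zeta in Hdft.
  assert (HP : forall j, cs (fun k => Cmult (c k) (E (INR k * (INR j * ang M)))) M
                = cs (fun k => Cmult (Cpow (Cmult (RtoC r) (E (INR j * ang M))) k) (b k)) M).
  { intros j. apply cs_ext. intros k _. unfold c. rewrite Cpow_mult_l, E_pow, <- RtoC_pow. ring. }
  assert (HuM : forall j, Cmod (Cmult (RtoC r) (E (INR j * ang M))) = r).
  { intros j. rewrite Cmod_mult, Cmod_E, Hur. ring. }
  rewrite (cs_ext _ (fun j => RtoC (Cmod (cs (fun k => Cmult (c k) (E (INR k * (INR j * ang M)))) M) ^ 2))) in Hdft.
  2:{ intros j _. rewrite Cmod2_conj. reflexivity. }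
  rewrite (cs_ext (fun k => Cmult (c k) (Cconj (c k))) (fun k => RtoC (Cmod (c k) ^ 2))) in Hdft.
  2:{ intros k _. rewrite Cmod2_conj. reflexivity. }
  rewrite !cs_RtoC, <- RtoC_mult in Hdft. apply RtoC_inj' in Hdft.
  assert (Hle : INR M * rs (fun k => Cmod (c k) ^ 2) M <= INR M * (B + eps) ^ 2).
  { rewrite <- Hdft. replace (INR M * (B + eps) ^ 2) with (rs (fun _ => (B + eps) ^ 2) M) by (rewrite rs_const; ring). apply rs_le. intros j _.
    rewrite HP. pose proof (Htr _ (HuM j)). pose proof (Cmod_ge_0 (cs (fun k => Cmult (Cpow (Cmult (RtoC r) (E (INR j * ang M))) k) (b k)) M)).
    nra. }
  assert (HMr : 0 < INR M) by (apply lt_0_INR; auto).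
  apply Rmult_le_reg_l in Hle; auto.
  eapply Rle_trans. 2: exact Hle.
  eapply Rle_trans. apply (rs_mono _ N M). intros; apply Rmult_le_pos; [apply pow2_ge_0| apply pow_le; auto]. unfold M; lia.
  apply Req_le. apply rs_ext. intros k _. unfold c. rewrite Cmod_mult, Cmod_R, Rabs_pos_eq by (apply pow_le; auto).
  rewrite Nat.mul_comm, pow_mult. ring.
Qed.

Lemma pser_at0 (a : nat -> C) (l : C) :
  is_seriesC (fun k => Cmult (Cpow (RtoC 0) k) (a k)) l -> l = a O.
Proof.
  intros H. apply (series_unique_C _ _ _ H).
  apply (proj2 (series_C_eps _ _)). intros eps Heps. exists 1%nat. intros n Hn.
  destruct n as [|n]; [lia|].
  assert (cs (fun k => Cmult (Cpow (RtoC 0) k) (a k)) (S n) = a O).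
  { induction n as [|n IH]. simpl. ring. simpl cs in *. rewrite IH by lia. simpl Cpow. ring. }
  rewrite H0. replace (Cminus (a O) (a O)) with (RtoC 0) by ring. rewrite Cmod_0. auto.
Qed.

Lemma shift2 (p : nat -> C) (F D z : C) : p O = RtoC 0 ->
  is_seriesC (fun k => Cmult (Cpow z k) (p k)) F ->
  is_seriesC (fun k => Cmult (Cpow z k) (Cmult (RtoC (INR (S k))) (p (S k)))) D ->
  is_seriesC (fun n => Cmult (Cmult z z) (Cmult (Cpow z n) (Cmult (RtoC (INR (S n))) (p (S (S n))))))
     (Cminus (Cmult z D) F).
Proof.
  intros Hp0 HF HD.
  assert (HF1 : is_seriesC (fun k => Cmult (Cpow z (S k)) (p (S k))) F).
  { apply (is_series_incr_1 (V := C_NormedModule) (fun k => Cmult (Cpow z k) (p k))).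
    match goal with |- is_series _ ?l => replace l with F; auto end.
    change (F = Cplus F (Cmult (Cpow z O) (p O))). rewrite Hp0. ring. }
  pose proof (is_series_scal z _ _ HD) as HD1.
  pose proof (is_series_minus _ _ _ _ HD1 HF1) as H3.
  assert (H4 : is_seriesC (fun k => Cmult (Cpow z (S k)) (Cmult (RtoC (INR k)) (p (S k)))) (Cminus (Cmult z D) F)).
  { apply (is_series_ext (V := C_NormedModule)) with (2 := H3).
    intros k. change (Cplus (Cmult z (Cmult (Cpow z k) (Cmult (RtoC (INR (S k))) (p (S k))))) (Copp (Cmult (Cpow z (S k)) (p (S k))))
      = Cmult (Cpow z (S k)) (Cmult (RtoC (INR k)) (p (S k)))).
    rewrite S_INR, RtoC_plus. simpl Cpow. ring. }
  assert (H5 : is_seriesC (fun n => Cmult (Cpow z (S (S n))) (Cmult (RtoC (INR (S n))) (p (S (S n))))) (Cminus (Cmult z D) F)).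
  { apply (is_series_incr_1 (V := C_NormedModule) (fun k => Cmult (Cpow z (S k)) (Cmult (RtoC (INR k)) (p (S k))))).
    match goal with |- is_series _ ?l => replace l with (Cminus (Cmult z D) F); auto end.
    change (Cminus (Cmult z D) F = Cplus (Cminus (Cmult z D) F) (Cmult (Cpow z 1) (Cmult (RtoC (INR O)) (p 1%nat)))).
    simpl INR. ring. }
  apply (is_series_ext (V := C_NormedModule)) with (2 := H5).
  intros n. change (Cmult (Cpow z (S (S n))) (Cmult (RtoC (INR (S n))) (p (S (S n)))) =
    Cmult (Cmult z z) (Cmult (Cpow z n) (Cmult (RtoC (INR (S n))) (p (S (S n)))))).
  simpl Cpow. ring.
Qed.

Lemma growth_shift (a : nat -> C) (F : C -> C) m :
  (forall z, Cmod z < 1 -> is_seriesC (fun k => Cmult (Cpow z k) (a k)) (F z)) ->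
  forall r, 0 <= r < 1 -> ex_series (fun k => INR (m + k) ^ 2 * (Cmod (a (m + k)%nat) * r ^ k)).
Proof.
  intros HF r Hr.
  set (rho := (1 + r) / 2).
  assert (Hrho : 0 < rho < 1) by (unfold rho; lra).
  pose proof (growth a F HF rho ltac:(lra)) as Hg.
  apply (ex_series_incr_n _ m) in Hg.
  apply (@ex_series_le R_AbsRing R_CompleteNormedModule _ (fun k => / rho ^ m * (INR (m + k) ^ 2 * (Cmod (a (m + k)%nat) * rho ^ (m + k))))).
  - intros n. change norm with Rabs.
    assert (0 < rho ^ m) by (apply pow_lt; lra).
    assert (r ^ n <= rho ^ n) by (apply pow_incr; unfold rho; lra).
    assert (0 <= INR (m + n) ^ 2 * Cmod (a (m + n)%nat)) by (apply Rmult_le_pos; [apply pow2_ge_0|apply Cmod_ge_0]).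
    rewrite Rabs_pos_eq.
    2:{ apply Rmult_le_pos. apply pow2_ge_0. apply Rmult_le_pos. apply Cmod_ge_0. apply pow_le; lra. }
    rewrite pow_add.
    replace (/ rho ^ m * (INR (m + n) ^ 2 * (Cmod (a (m + n)%nat) * (rho ^ m * rho ^ n))))
      with (INR (m + n) ^ 2 * Cmod (a (m + n)%nat) * rho ^ n) by (field; lra).
    rewrite <- Rmult_assoc. apply Rmult_le_compat_l; auto.
  - apply (@ex_series_scal_l R_AbsRing R_NormedModule). exact Hg.
Qed.

Lemma deriv_exists (a : nat -> C) (F : C -> C) z :
  (forall w, Cmod w < 1 -> is_seriesC (fun k => Cmult (Cpow w k) (a k)) (F w)) ->
  Cmod z < 1 ->
  exists D, is_seriesC (fun k => Cmult (Cpow z k) (Cmult (RtoC (INR (S k))) (a (S k)))) D.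
Proof.
  intros HF Hz.
  pose proof (growth_shift a F 1 HF (Cmod z) (conj (Cmod_ge_0 z) Hz)) as Hg.
  assert (Hex : ex_series (V := C_NormedModule) (fun k => Cmult (Cpow z k) (Cmult (RtoC (INR (S k))) (a (S k))))).
  { apply (@ex_series_le C_AbsRing C_CompleteNormedModule) with (2 := Hg).
    intros n. change norm with Cmod. rewrite !Cmod_mult, Cmod_R, Cmod_pow, Rabs_pos_eq by apply pos_INR.
    simpl (1 + n)%nat.
    assert (1 <= INR (S n)) by (rewrite S_INR; pose proof (pos_INR n); lra).
    assert (0 <= Cmod (a (S n)) * Cmod z ^ n) by (apply Rmult_le_pos; [apply Cmod_ge_0|apply pow_le, Cmod_ge_0]).
    replace (Cmod z ^ n * (INR (S n) * Cmod (a (S n)))) with (INR (S n) * (Cmod (a (S n)) * Cmod z ^ n)) by ring.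
    apply Rmult_le_compat_r; auto. nra. }
  destruct Hex as [D HD]. exists D. exact HD.
Qed.

Lemma omega_coef (lam : R) (f : C -> C) (a : nat -> C) :
  0 < lam -> Omega lam f -> pseries_rep f a ->
  a O = RtoC 0 /\ a 1%nat = RtoC 1 /\
  forall r, 0 < r < 1 -> forall N,
    rs (fun n => Cmod (Cmult (RtoC (INR (S n))) (a (S (S n)))) ^ 2 * r ^ (2 * n)) N <= lam ^ 2.
Proof.
  intros Hlam [_ [f0 [fd0 [phi [_ [Hphi Hd]]]]]] Hrep.
  assert (HF : forall z, Cmod z < 1 -> is_seriesC (fun k => Cmult (Cpow z k) (a k)) (f z)).
  { intros z Hz. exact (Hrep z Hz). }
  assert (H00 : Cmod (RtoC 0) < 1) by (rewrite Cmod_0; lra).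
  split; [|split].
  - rewrite <- (pser_at0 a (f (RtoC 0)) (HF _ H00)). exact f0.
  - destruct (deriv_exists a f (RtoC 0) HF H00) as [D0 HD0].
    pose proof (pser_derive a f (RtoC 0) D0 HF H00 HD0) as Hder.
    apply is_C_derive_unique in Hder. apply is_C_derive_unique in fd0.
    rewrite fd0 in Hder.
    pose proof (pser_at0 (fun k => Cmult (RtoC (INR (S k))) (a (S k))) D0 HD0) as H1.
    rewrite <- Hder in H1. simpl INR in H1. rewrite H1. ring.
  - intros r Hr N.
    apply (parseval (fun k => Cmult (RtoC (INR (S k))) (a (S (S k)))) (fun u => Cmult (RtoC lam) (phi u)) r lam).
    + lra.
    + pose proof (growth_shift a f 2 HF r ltac:(lra)) as Hg.
      apply (@ex_series_le R_AbsRing R_CompleteNormedModule) with (2 := Hg).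
      intros n. change norm with Rabs.
      rewrite Cmod_mult, Cmod_R, (Rabs_pos_eq (INR (S n))) by apply pos_INR.
      assert (0 <= Cmod (a (S (S n))) * r ^ n) by (apply Rmult_le_pos; [apply Cmod_ge_0|apply pow_le; lra]).
      rewrite Rabs_pos_eq by (apply Rmult_le_pos; [apply Rmult_le_pos; [apply pos_INR|apply Cmod_ge_0]|apply pow_le; lra]).
      replace (INR (S n) * Cmod (a (S (S n))) * r ^ n) with (INR (S n) * (Cmod (a (S (S n))) * r ^ n)) by ring.
      simpl (2 + n)%nat.
      apply Rmult_le_compat_r; auto.
      assert (INR (S n) <= INR (S (S n))) by (apply le_INR; lia).
      assert (1 <= INR (S (S n))) by (rewrite !S_INR; pose proof (pos_INR n); lra).
      pose proof (pos_INR (S n)). nra.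
    + intros u Hu.
      assert (Hu1 : Cmod u < 1) by lra.
      assert (Hu0 : u <> RtoC 0) by (intros E0; rewrite E0, Cmod_0 in Hu; lra).
      destruct (deriv_exists a f u HF Hu1) as [D HD].
      pose proof (pser_derive a f u D HF Hu1 HD) as Hder.
      destruct (Hd u Hu1) as [d [Hdd Heq]].
      apply is_C_derive_unique in Hder. apply is_C_derive_unique in Hdd. rewrite Hdd in Hder. subst d.
      assert (Ha0 : a O = RtoC 0) by (rewrite <- (pser_at0 a (f (RtoC 0)) (HF _ H00)); exact f0).
      pose proof (shift2 a (f u) D u Ha0 (HF u Hu1) HD) as Hs.
      rewrite Heq in Hs.
      pose proof (is_series_scal (Cinv (Cmult u u)) _ _ Hs) as Hs2.
      apply (is_series_ext (V := C_NormedModule)) with (a := fun n => scal (Cinv (Cmult u u)) (Cmult (Cmult u u) (Cmult (Cpow u n) (Cmult (RtoC (INR (S n))) (a (S (S n))))))).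
      * intros n. change (Cmult (Cinv (Cmult u u)) (Cmult (Cmult u u) (Cmult (Cpow u n) (Cmult (RtoC (INR (S n))) (a (S (S n)))))) = Cmult (Cpow u n) (Cmult (RtoC (INR (S n))) (a (S (S n))))).
        field. auto.
      * match goal with |- is_series _ ?l => replace l with (scal (Cinv (Cmult u u)) (Cmult (Cmult (RtoC lam) (Cmult u u)) (phi u))); auto end.
        change (Cmult (Cinv (Cmult u u)) (Cmult (Cmult (RtoC lam) (Cmult u u)) (phi u)) = Cmult (RtoC lam) (phi u)).
        field. auto.
    + intros u Hu. rewrite Cmod_mult, Cmod_R, Rabs_pos_eq by lra.
      assert (Cmod (phi u) <= 1) by (apply Hphi; unfold in_disk; lra).
      pose proof (Cmod_ge_0 (phi u)). nra.
Qed.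

Definition CSer (t : nat -> C) : C := epsilon (inhabits (RtoC 0)) (fun l => is_seriesC t l).

Lemma CSer_spec (t : nat -> C) : ex_series (V := C_NormedModule) t -> is_seriesC t (CSer t).
Proof. intros H. unfold CSer. apply (epsilon_spec (inhabits (RtoC 0)) (fun l => is_seriesC t l)). exact H. Qed.

Theorem theorem4p5 (lam : R) (f1 f2 h : C -> C) (a1 a2 : nat -> C) :
  0 < lam -> lam <= 1 ->
  Omega lam f1 -> Omega lam f2 ->
  pseries_rep f1 a1 -> pseries_rep f2 a2 ->
  hadamard_rep h a1 a2 ->
  Omega lam h.
Proof.
  intros Hlam Hlam1 HO1 HO2 Hr1 Hr2 Hh.
  destruct (omega_coef lam f1 a1 Hlam HO1 Hr1) as [a10 [a11 HP1]].
  destruct (omega_coef lam f2 a2 Hlam HO2 Hr2) as [a20 [a21 HP2]].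
  set (p := fun k => Cmult (a1 k) (a2 k)).
  assert (HF : forall z, Cmod z < 1 -> is_seriesC (fun k => Cmult (Cpow z k) (p k)) (h z)).
  { intros z Hz. exact (Hh z Hz). }
  assert (H00 : Cmod (RtoC 0) < 1) by (rewrite Cmod_0; lra).
  assert (Hp0 : p O = RtoC 0) by (unfold p; rewrite a10; ring).
  set (e := fun n => Cmult (RtoC (/ lam)) (Cmult (RtoC (INR (S n))) (p (S (S n))))).
  assert (Hbd : forall z, Cmod z < 1 -> forall N, rs (fun n => Cmod (Cmult (Cpow z n) (e n))) N <= lam).
  { intros z Hz N.
    set (r := sqrt (Rmax (Cmod z) (1 / 4))).
    assert (Hm : 1/4 <= Rmax (Cmod z) (1/4) < 1).
    { split. apply Rmax_r. apply Rmax_lub_lt; lra. }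
    assert (Hr2' : r * r = Rmax (Cmod z) (1/4)) by (unfold r; apply sqrt_sqrt; lra).
    assert (Hr0 : 0 < r) by (unfold r; apply sqrt_lt_R0; lra).
    assert (Hr1' : r < 1) by nra.
    pose proof (HP1 r (conj Hr0 Hr1') N) as P1.
    pose proof (HP2 r (conj Hr0 Hr1') N) as P2.
    set (b1 := fun n => Cmod (Cmult (RtoC (INR (S n))) (a1 (S (S n))))) in *.
    set (b2 := fun n => Cmod (Cmult (RtoC (INR (S n))) (a2 (S (S n))))) in *.
    apply Rle_trans with (rs (fun n => (b1 n ^ 2 * r ^ (2 * n) + b2 n ^ 2 * r ^ (2 * n)) / (2 * lam)) N).
    - apply rs_le. intros n _.
      assert (Hzn : Cmod z ^ n <= r ^ (2 * n)).
      { rewrite pow_mult. apply pow_incr. split. apply Cmod_ge_0. simpl. rewrite Rmult_1_r, Hr2'. apply Rmax_l. }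
      assert (He : Cmod (e n) * INR (S n) = b1 n * b2 n / lam).
      { unfold e, b1, b2, p. rewrite !Cmod_mult, !Cmod_R.
        rewrite (Rabs_pos_eq (/ lam)) by (apply Rlt_le, Rinv_0_lt_compat; lra).
        rewrite !(Rabs_pos_eq (INR _)) by apply pos_INR. field. lra. }
      assert (HS : 1 <= INR (S n)) by (rewrite S_INR; pose proof (pos_INR n); lra).
      assert (Hb1 : 0 <= b1 n) by apply Cmod_ge_0. assert (Hb2 : 0 <= b2 n) by apply Cmod_ge_0.
      assert (He0 : 0 <= Cmod (e n)) by apply Cmod_ge_0.
      assert (Hrn : 0 <= r ^ (2 * n)) by (apply pow_le; lra).
      assert (Hzn0 : 0 <= Cmod z ^ n) by (apply pow_le, Cmod_ge_0).
      rewrite Cmod_mult, Cmod_pow.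
      assert (Hen : Cmod (e n) <= b1 n * b2 n / lam) by nra.
      assert (Hprod : b1 n * b2 n / lam * r ^ (2 * n) <= (b1 n ^ 2 * r ^ (2 * n) + b2 n ^ 2 * r ^ (2 * n)) / (2 * lam)).
      { unfold Rdiv. apply (Rmult_le_reg_l (2 * lam)). lra.
        replace (2 * lam * (b1 n * b2 n * / lam * r ^ (2 * n))) with (2 * (b1 n * b2 n) * r ^ (2 * n)) by (field; lra).
        replace (2 * lam * ((b1 n ^ 2 * r ^ (2 * n) + b2 n ^ 2 * r ^ (2 * n)) * / (2 * lam))) with ((b1 n ^ 2 + b2 n ^ 2) * r ^ (2 * n)) by (field; lra).
        apply Rmult_le_compat_r; auto. pose proof (pow2_ge_0 (b1 n - b2 n)). nra. }
      apply Rle_trans with (b1 n * b2 n / lam * r ^ (2 * n)); auto.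
      apply Rle_trans with (Cmod (e n) * r ^ (2 * n)). 
      + rewrite Rmult_comm. apply Rmult_le_compat_l; auto.
      + apply Rmult_le_compat_r; auto.
    - rewrite (rs_ext _ (fun n => / (2 * lam) * (b1 n ^ 2 * r ^ (2 * n) + b2 n ^ 2 * r ^ (2 * n)))) by (intros; unfold Rdiv; ring).
      rewrite rs_scal_l, rs_plus.
      apply (Rmult_le_reg_l (2 * lam)). lra.
      rewrite <- Rmult_assoc, Rinv_r by lra. unfold b1, b2. cbv beta. nra. }
  set (psi := fun z => CSer (fun n => Cmult (Cpow z n) (e n))).
  assert (Hpsi : forall z, Cmod z < 1 -> is_seriesC (fun n => Cmult (Cpow z n) (e n)) (psi z)).
  { intros z Hz. apply CSer_spec.
    apply (@ex_series_le C_AbsRing C_CompleteNormedModule _ (fun n => Cmod (Cmult (Cpow z n) (e n)))).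
    - intros n. change norm with Cmod. lra.
    - apply (ex_series_bounded _ lam). intros; apply Cmod_ge_0. apply Hbd; auto. }
  split; [|split; [|split]].
  - exists p. exact Hh.
  - rewrite (pser_at0 p (h (RtoC 0)) (HF _ H00)). exact Hp0.
  - destruct (deriv_exists p h (RtoC 0) HF H00) as [D0 HD0].
    pose proof (pser_derive p h (RtoC 0) D0 HF H00 HD0) as Hder.
    pose proof (pser_at0 (fun k => Cmult (RtoC (INR (S k))) (p (S k))) D0 HD0) as H1.
    assert (E1 : @eq C D0 (RtoC 1)).
    { rewrite H1. cbv beta. unfold p. rewrite a11, a21. simpl INR. ring. }
    rewrite <- E1. exact Hder.
  - exists psi. split; [|split].
    + exists e. intros z Hz. exact (Hpsi z Hz).
    + intros z Hz. apply (series_norm_le _ _ _ (Hpsi z Hz)). intros n.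
      eapply Rle_trans. apply Cmod_cs. eapply Rle_trans. apply Hbd. exact Hz. lra.
    + intros z Hz.
      destruct (deriv_exists p h z HF Hz) as [D HD].
      exists D. split.
      * apply (pser_derive p h z D HF Hz HD).
      * pose proof (shift2 p (h z) D z Hp0 (HF z Hz) HD) as Hs.
        pose proof (is_series_scal (Cmult (RtoC lam) (Cmult z z)) _ _ (Hpsi z Hz)) as Hs2.
        apply (series_unique_C _ _ _ Hs).
        apply (is_series_ext (V := C_NormedModule)) with (2 := Hs2).
        intros n. change (Cmult (Cmult (RtoC lam) (Cmult z z)) (Cmult (Cpow z n) (e n)) =
          Cmult (Cmult z z) (Cmult (Cpow z n) (Cmult (RtoC (INR (S n))) (p (S (S n)))))).
        unfold e. rewrite RtoC_inv by lra. field.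
        intros H0. apply RtoC_inj' in H0. lra.
Qed.
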